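(* Assume $\operatorname{rank}(X)=n$, let $m\ge\nu_n(X)$ be an integer, and let $A^\circ=[a_1^\circ\ \cdots\ a_s^\circ]\in\mathbb{R}^{n\times s}$ satisfy $\min_{i\in\mathbb{S}}|I_i(A^\circ)|\ge s\,m$. Let $$\gamma_m=\inf\big\{\|X_I^\top\eta\|_1:\eta\in\mathbb{R}^n,\ \|\eta\|_2=1,\ I\subset\mathbb{T},\ |I|\ge m\big\}.$$ If for some $r\in\{0,\ldots,N\}$ with $\xi_r(\varpi^N)<1/2$, $$\min_{i\ne j}\|a_i^\circ-a_j^\circ\|_2>\frac{2\,\delta_r(A^\circ)}{\gamma_m\big(1-2\xi_r(\varpi^N)\big)},$$ then $A^\circ$ and $\hat A$ are comparable over $\varpi^N$ for every $\hat A\in\arg\min_A\mathcal{J}(A)$.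
   Context: Data: integers $n,s,N\ge1$ and a dataset $\varpi^N=((x_1,y_1),\ldots,(x_N,y_N))$ with $x_t\in\mathbb{R}^n$, $y_t\in\mathbb{R}$; $X=[x_1\ \cdots\ x_N]\in\mathbb{R}^{n\times N}$, and $X_I$ denotes the submatrix of columns indexed by $I$. Let $\mathbb{T}=\{1,\ldots,N\}$, $\mathbb{S}=\{1,\ldots,s\}$. For $A=[a_1\ \cdots\ a_s]\in\mathbb{R}^{n\times s}$, $\sigma_A:\mathbb{T}\to\mathbb{S}$ is a switching signal satisfying $\sigma_A(t)\in\arg\min_{i\in\mathbb{S}}|y_t-x_t^\top a_i|$ for all $t$, selected uniquely by a fixed rule depending only on $A$ and the data (among all admissible choices, one maximizing $\min_{i}|I_i(A)|$, ties then broken by assigning the smallest admissible index). $I_i(A)=\{t\in\mathbb{T}:\sigma_A(t)=i\}$. $\phi(A)=\big(y_1-x_1^\top a_{\sigma_A(1)},\ldots,y_N-x_N^\top a_{\sigma_A(N)}\big)^\top$, $\mathcal{J}(A)=\|\phi(A)\|_1$, $\phi_{\mathcal{T}}(A)$ its subvector indexed by $\mathcal{T}\subset\mathbb{T}$. $\mathcal{S}_r=\{w\in\mathbb{R}^N:\|w\|_0\le r\}$, $\delta_r(A)=\inf_{w\in\mathcal{S}_r}\|\phi(A)-w\|_1$. The $r$-th concentration ratio is $$\xi_r(\varpi^N)=\sup\Big\{\frac{\|\phi_{\mathcal{T}}(A)-\phi_{\mathcal{T}}(A')\|_1}{\|\phi(A)-\phi(A')\|_1}: A,A'\in\mathbb{R}^{n\times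 s},\ \mathcal{T}\subset\mathbb{T},\ \phi(A)\ne\phi(A'),\ |\mathcal{T}|\le r\Big\}.$$ Genericity index: for $\operatorname{rank}(X)=n$, $\nu_n(X)$ is the smallest integer $m$ such that every submatrix formed by $m$ columns of $X$ has rank $n$. Comparability: $A,A'$ are comparable over $\varpi^N$ if there is a permutation $\pi$ of $\mathbb{S}$ with $|I_i(A)\cap I_{\pi(i)}(A')|\ge\nu_n(X)$ for all $i$. *)

(* Defs.v *)
From HB Require Import structures.
From mathcomp Require Import all_boot all_order all_algebra.
From mathcomp Require Import perm.
From mathcomp Require Import all_classical all_reals.
Set Implicit Arguments. Unset Strict Implicit. Unset Printing Implicit Defensive.
Import Order.TTheory GRing.Theory Num.Theory.
Local Open Scope ring_scope.

Section PWA.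
Variables (R : realType) (n s N : nat).
Variables (X : 'M[R]_(n, N)) (y : 'I_N -> R).

Definition res (A : 'M[R]_(n, s)) (t : 'I_N) (i : 'I_s) : R :=
  y t - \sum_(k < n) X k t * A k i.

Definition admissible (A : 'M[R]_(n, s)) (sg : {ffun 'I_N -> 'I_s}) : bool :=
  [forall t, forall i, `|res A t (sg t)| <= `|res A t i|].

Definition Iset_of (sg : {ffun 'I_N -> 'I_s}) (i : 'I_s) : {set 'I_N} :=
  [set t | sg t == i].

(* min_i |I_i| (N serves as neutral element, since |I_i| <= N) *)
Definition mincard (sg : {ffun 'I_N -> 'I_s}) : nat :=
  \big[minn/N]_(i < s) #|Iset_of sg i|.

Definition optimal (A : 'M[R]_(n, s)) (sg : {ffun 'I_N -> 'I_s}) : bool :=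
  admissible A sg &&
  [forall sg' : {ffun 'I_N -> 'I_s}, admissible A sg' ==> (mincard sg' <= mincard sg)%N].

Definition lexle (sg sg' : {ffun 'I_N -> 'I_s}) : bool :=
  (sg == sg') ||
  [exists t : 'I_N, (sg t < sg' t)%N &&
     [forall t' : 'I_N, (t' < t)%N ==> (sg t' == sg' t')]].

(* the selected switching signal sigma_A (None only if no admissible signal
   exists, which cannot happen when s >= 1) *)
Definition sigma_opt (A : 'M[R]_(n, s)) : option {ffun 'I_N -> 'I_s} :=
  [pick sg | optimal A sg &&
     [forall sg' : {ffun 'I_N -> 'I_s}, optimal A sg' ==> lexle sg sg']].

Definition Iset (A : 'M[R]_(n, s)) (i : 'I_s) : {set 'I_N} :=
  [set t | if sigma_opt A is Some sg then sg t == i else false].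

Definition phi (A : 'M[R]_(n, s)) (t : 'I_N) : R :=
  if sigma_opt A is Some sg then res A t (sg t) else 0.

Definition l1 (v : 'I_N -> R) : R := \sum_t `|v t|.

Definition J (A : 'M[R]_(n, s)) : R := l1 (phi A).

Definition delta (r : nat) (A : 'M[R]_(n, s)) : R :=
  inf [set d | exists w : 'I_N -> R,
         (#|[set t | w t != 0%R]| <= r)%N /\ d = l1 (fun t => phi A t - w t)].

Definition xi (r : nat) : R :=
  sup [set q | exists (A A' : 'M[R]_(n, s)) (T : {set 'I_N}),
         phi A <> phi A' /\ (#|T| <= r)%N /\
         q = (\sum_(t in T) `|phi A t - phi A' t|) / l1 (fun t => phi A t - phi A' t)].

(* X_I : submatrix of the columns indexed by I (in increasing order) *)
Definition Xsub (I : {set 'I_N}) : 'M[R]_(n, #|I|) :=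
  colsub (fun j : 'I_#|I| => enum_val j) X.

Definition all_sub_full (m : nat) : bool :=
  [forall I : {set 'I_N}, (#|I| == m) ==> (\rank (Xsub I) == n)%N].

(* genericity index nu_n(X): smallest m with all_sub_full m
   (all_sub_full N.+1 holds vacuously, so this is the exact minimum) *)
Definition nu : nat := find all_sub_full (iota 0 N.+2).

Definition comparable_over (A A' : 'M[R]_(n, s)) : Prop :=
  exists pi : {perm 'I_s},
    forall i : 'I_s, (nu <= #|Iset A i :&: Iset A' (pi i)|)%N.

Definition norm2 (v : 'cV[R]_n) : R := Num.sqrt (\sum_(k < n) v k 0 ^+ 2).

Definition gamma (m : nat) : R :=
  inf [set g | exists (eta : 'cV[R]_n) (I : {set 'I_N}),
         norm2 eta = 1 /\ (m <= #|I|)%N /\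
         g = \sum_(j < #|I|) `|((Xsub I)^T *m eta) j 0|].

End PWA.

(* Main.v *)
Require Import Defs.
From HB Require Import structures.
From mathcomp Require Import all_boot all_order all_algebra.
From mathcomp Require Import perm.
From mathcomp Require Import all_classical all_reals.
From mathcomp Require Import fintype finset.
From mathcomp Require Import ring lra.
Import Order.TTheory GRing.Theory Num.Theory.
Local Open Scope ring_scope.
Set Implicit Arguments. Unset Strict Implicit. Unset Printing Implicit Defensive.

Lemma exists_min (T : finType) (le : rel T) (P : pred T) :
  (forall x y z, le x y -> le y z -> le x z) -> (forall x y, le x y || le y x) ->
  (exists x, P x) -> exists2 x, P x & forall y, P y -> le x y.
Proof.
move=> tr tot [x0 Px0].
pose f x := #|[set z | P z && le z x]|.
case: (arg_minnP f Px0) => x Px xmin.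
exists x => // z Pz; apply/negPn/negP => nxz.
have lzx : le z x by have := tot x z; rewrite (negbTE nxz).
have : (f z < f x)%N.
  apply: proper_card; apply/properP; split.
    by apply/fintype.subsetP => w; rewrite !inE => /andP[Pw lwz]; rewrite Pw (tr _ _ _ lwz lzx).
  exists x; rewrite !inE ?Px ?nxz //=.
  by have := tot x x; rewrite orbb.
by rewrite ltnNge xmin.
Qed.

Section Sig.
Variables (R : realType) (n s N : nat) (X : 'M[R]_(n, N)) (y : 'I_N -> R).

Lemma lexle_tr (a b c : {ffun 'I_N -> 'I_s}) :
  lexle a b -> lexle b c -> lexle a c.
Proof.
case/orP=> [/eqP-> //|/existsP[t1 /andP[h1 e1]]].
case/orP=> [/eqP<-|/existsP[t2 /andP[h2 e2]]]; first by apply/orP; right; apply/existsP; exists t1; rewrite h1.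
apply/orP; right; apply/existsP.
have [lt12|ge12] := ltnP t1 t2.
  exists t1; apply/andP; split.
    by have /forall_inP := e2 => /(_ t1 lt12) /eqP <-.
  apply/forall_inP => t' lt'; rewrite (eqP (forall_inP e1 t' lt')).
  by apply: (forall_inP e2); apply: ltn_trans lt' lt12.
exists t2; apply/andP; split.
  move: ge12; rewrite leq_eqVlt => /orP[/eqP eq12|lt21].
    have -> : t2 = t1 by apply: val_inj.
    by apply: ltn_trans h1 _; have := h2; rewrite (_ : t2 = t1) //; apply: val_inj.
  by have := forall_inP e1 t2 lt21 => /eqP ->.
apply/forall_inP => t' lt'; rewrite -(eqP (forall_inP e2 t' lt')).
by apply: (forall_inP e1); apply: leq_trans lt' ge12.
Qed.

Lemma lexle_tot (a b : {ffun 'I_N -> 'I_s}) : lexle a b || lexle b a.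
Proof.
have [->|neq] := eqVneq a b; first by rewrite /lexle eqxx.
have [t0 ht0] : exists t, a t != b t.
  apply/existsP; apply: contraR neq; rewrite negb_exists => /forallP H.
  by apply/eqP/ffunP => t; apply/eqP; move: (H t); rewrite negbK.
case: (@arg_minnP _ t0 (fun t => a t != b t) (fun t : 'I_N => val t) ht0) => t ht tmin.
have E : [forall t' : 'I_N, (t' < t)%N ==> (a t' == b t')].
  apply/forall_inP => t' lt'; apply: contraLR lt' => ne; rewrite -leqNgt.
  exact: tmin.
have E' : [forall t' : 'I_N, (t' < t)%N ==> (b t' == a t')].
  by apply/forall_inP => t' lt'; rewrite eq_sym (forall_inP E t' lt').
case: (ltngtP (a t) (b t)) => [lt|gt|eq].
- by apply/orP; left; apply/orP; right; apply/existsP; exists t; rewrite lt E.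
- by apply/orP; right; apply/orP; right; apply/existsP; exists t; rewrite gt E'.
- by move: ht; rewrite (_ : a t = b t) ?eqxx //; apply: val_inj.
Qed.

Lemma sigma_some (A : 'M[R]_(n, s)) : (0 < s)%N ->
  exists sg, sigma_opt X y A = Some sg.
Proof.
move=> s0.
have ex_adm : exists sg, admissible X y A sg.
  have H : forall t : 'I_N, exists i : 'I_s,
      [forall i', `|res X y A t i| <= `|res X y A t i'|].
    move=> t.
    have [i _ imin] := @exists_min 'I_s (fun i i' => `|res X y A t i| <= `|res X y A t i'|)
      predT (fun a b c => @le_trans _ _ _ _ _) (fun a b => le_total _ _)
      (ex_intro _ (Ordinal s0) isT).
    by exists i; apply/forallP => i'; apply: imin.
  exists [ffun t => xchoose (H t)]; apply/forallP => t; apply/forallP => i.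
  rewrite ffunE; exact: (forallP (xchooseP (H t)) i).
have [sg1 adm1 max1] := @exists_min _ (fun a b => mincard b <= mincard a)%N
  (admissible X y A) (fun a b c h1 h2 => leq_trans h2 h1) (fun a b => leq_total _ _) ex_adm.
have ex_opt : exists sg, optimal X y A sg.
  exists sg1; rewrite /optimal adm1 /=; apply/forallP => sg'; apply/implyP; exact: max1.
have [sg2 opt2 min2] := @exists_min _ (@lexle s N) (optimal X y A) (@lexle_tr) (@lexle_tot) ex_opt.
rewrite /sigma_opt; case: pickP => [sg _|H]; first by exists sg.
move: (H sg2); rewrite opt2 /=.
by have -> : [forall sg', optimal X y A sg' ==> lexle sg2 sg'] by apply/forallP => sg'; apply/implyP; exact: min2.
Qed.

End Sig.
Lemma sub_card (T : finType) (I : {set T}) k : (k <= #|I|)%N ->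
  exists J : {set T}, J \subset I /\ #|J| = k.
Proof.
elim: k => [|k IH] hk; first by exists (@finset.set0 T); rewrite sub0set cards0.
have [J [JI cJ]] := IH (ltnW hk).
have : J \proper I by rewrite properEcard JI cJ.
case/properP => _ [x xI xJ].
exists (x |: J); split; first by rewrite subUset sub1set xI JI.
by rewrite cardsU1 xJ cJ add1n.
Qed.

Section Nu.
Variables (R : realType) (n s N : nat) (X : 'M[R]_(n, N)) (y : 'I_N -> R).

Lemma nu_pos : (0 < n)%N -> (0 < nu X)%N.
Proof.
move=> n0; rewrite /nu /=.
suff -> : all_sub_full X 0 = false by [].
apply/negbTE/negP => /forallP /(_ set0).
have c0 : #|@set0 'I_N| == 0%N by rewrite cards0.
rewrite c0 /= => /eqP h; have := rank_leq_col (Xsub X set0); rewrite h cards0.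
by rewrite leqNgt n0.
Qed.

Lemma nu_full : all_sub_full X (nu X).
Proof.
have hN : all_sub_full X N.+1.
  apply/forallP => I; apply/implyP => /eqP cI; exfalso.
  by move: (max_card I); rewrite cI card_ord ltnn.
have has1 : has (all_sub_full X) (iota 0 N.+2).
  apply/hasP; exists N.+1; [by rewrite mem_iota leq0n add0n ltnSn|exact: hN].
have := nth_find 0 has1.
rewrite -/(nu X) nth_iota //.
by rewrite -(size_iota 0 N.+2) -has_find.
Qed.

Definition xt (t : 'I_N) (eta : 'cV[R]_n) : R := \sum_(k < n) X k t * eta k 0.

Lemma xsub_sum (I : {set 'I_N}) (eta : 'cV[R]_n) :
  \sum_(j < #|I|) `|((Xsub X I)^T *m eta) j 0| = \sum_(t in I) `|xt t eta|.
Proof.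
rewrite (big_enum_val (A := mem I) (fun t => `|xt t eta|)) /=.
apply: eq_bigr => j _; congr `|_|; rewrite mxE /xt; apply: eq_bigr => k _.
by rewrite !mxE.
Qed.

End Nu.

Lemma ler_sum1 (R : realType) (I : finType) (F : I -> R) i :
  (forall j, 0 <= F j) -> F i <= \sum_j F j.
Proof. by move=> h; rewrite (bigD1 i) //= lerDl; apply: sumr_ge0 => j _; exact: h. Qed.

Lemma norm2_le_l1 (R : realType) n (v : 'cV[R]_n) : norm2 v <= \sum_k `|v k 0|.
Proof.
rewrite /norm2.
have h0 : 0 <= \sum_k `|v k 0| by apply: sumr_ge0.
rewrite -(ger0_norm h0) -sqrtr_sqr ler_sqrt ?sqr_ge0 //.
rewrite expr2 mulr_suml; apply: ler_sum => k _.
rewrite -real_normK ?num_real // expr2; apply: ler_wpM2l => //.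
by apply: (@ler_sum1 _ _ (fun j => `|v j 0|) k) => j.
Qed.

Section Gam.
Variables (R : realType) (n s N : nat) (X : 'M[R]_(n, N)) (y : 'I_N -> R).

Definition Lmat (J : {set 'I_N}) : 'M[R]_(n, #|J|) := pinvmx (Xsub X J)^T.
Definition SJ (J : {set 'I_N}) : R := \sum_(k < n) \sum_(j < #|J|) `|Lmat J k j|.
Definition Stot : R := \sum_(J : {set 'I_N}) SJ J.

Lemma SJ_ge0 J : 0 <= SJ J.
Proof. by apply: sumr_ge0 => k _; apply: sumr_ge0. Qed.

Lemma full_bound (J : {set 'I_N}) (eta : 'cV[R]_n) :
  \rank (Xsub X J) = n -> norm2 eta <= SJ J * \sum_(t in J) `|xt X t eta|.
Proof.
move=> rk.
set A := (Xsub X J)^T.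
have LA : Lmat J *m A = 1%:M.
  have := @mulmxKpV _ _ _ _ 1%:M A; rewrite mul1mx; apply.
  by rewrite sub1mx /row_full mxrank_tr rk.
set v := A *m eta.
have ev : eta = Lmat J *m v by rewrite /v mulmxA LA mul1mx.
rewrite -(xsub_sum X J eta) -/A.
set V := \sum_(j < #|J|) `|v j 0|.
apply: le_trans (norm2_le_l1 eta) _.
rewrite /SJ mulr_suml; apply: ler_sum => k _.
rewrite ev mxE mulr_suml; apply: le_trans (ler_norm_sum _ _ _) _.
apply: ler_sum => j _; rewrite normrM; apply: ler_wpM2l => //.
by apply: (@ler_sum1 _ _ (fun j => `|v j 0|) j) => j'.
Qed.

Lemma gamma_lb : exists2 c : R, 0 < c & forall (eta : 'cV[R]_n) (I : {set 'I_N}),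
  norm2 eta = 1 -> (nu X <= #|I|)%N -> c <= \sum_(t in I) `|xt X t eta|.
Proof.
exists (Stot + 1)^-1.
  by rewrite invr_gt0 ltr_wpDl // sumr_ge0 // => J _; exact: SJ_ge0.
move=> eta I e1 cI.
have [J [JI cJ]] := sub_card cI.
have rk : \rank (Xsub X J) = n.
  have cJ' : #|J| == nu X by rewrite cJ.
  by have := forallP (nu_full X) J; rewrite cJ' /= => /eqP.
have hb := full_bound eta rk; rewrite e1 in hb.
have G0 : 0 <= \sum_(t in I) `|xt X t eta| by apply: sumr_ge0.
have VG : \sum_(t in J) `|xt X t eta| <= \sum_(t in I) `|xt X t eta|.
  rewrite [X in _ <= X](big_setID J) /= (setIidPr JI) lerDl.
  by apply: sumr_ge0.
have SS : SJ J <= Stot by apply: (@ler_sum1 _ _ SJ J) => J'; exact: SJ_ge0.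
have St0 : 0 <= Stot by apply: sumr_ge0 => J' _; exact: SJ_ge0.
have : 1 <= (Stot + 1) * \sum_(t in I) `|xt X t eta|.
  have h2 : SJ J * \sum_(t in J) `|xt X t eta| <= Stot * \sum_(t in I) `|xt X t eta|.
    apply: ler_pM => //; first exact: SJ_ge0.
    by apply: sumr_ge0.
  by apply: le_trans hb _; apply: le_trans h2 _; rewrite mulrDl mul1r lerDl.
move=> h; have p : 0 < Stot + 1 by rewrite ltr_wpDl.
rewrite -[X in _ <= X](mulKf (lt0r_neq0 p)) -{1}[_^-1]mulr1.
by apply: ler_wpM2l => //; rewrite invr_ge0 ltW.
Qed.

End Gam.
Section Norm.
Variables (R : realType) (n : nat).
Implicit Types u v : 'cV[R]_n.

Lemma norm2_scale (c : R) v : norm2 (c *: v) = `|c| * norm2 v.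
Proof.
rewrite /norm2 -sqrtr_sqr -sqrtrM ?sqr_ge0 // mulr_sumr.
by congr Num.sqrt; apply: eq_bigr => k _; rewrite mxE exprMn.
Qed.

Lemma norm2_opp v : norm2 (- v) = norm2 v.
Proof. by rewrite -scaleN1r norm2_scale normrN normr1 mul1r. Qed.

Lemma sq_expand (b d : R) u v :
  \sum_k (b * u k 0 - d * v k 0) ^+ 2 =
  b ^+ 2 * \sum_k u k 0 ^+ 2 - 2 * b * d * \sum_k u k 0 * v k 0 + d ^+ 2 * \sum_k v k 0 ^+ 2.
Proof.
rewrite !mulr_sumr -sumrB -big_split /=; apply: eq_bigr => k _.
by rewrite sqrrB !exprMn; ring.
Qed.

Lemma cauchy_schwarz u v :
  (\sum_k u k 0 * v k 0) ^+ 2 <= (\sum_k u k 0 ^+ 2) * (\sum_k v k 0 ^+ 2).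
Proof.
set a := \sum_k u k 0 ^+ 2; set b := \sum_k v k 0 ^+ 2; set d := \sum_k u k 0 * v k 0.
have b0 : 0 <= b by apply: sumr_ge0 => k _; exact: sqr_ge0.
have [bz|bp] := eqVneq b 0.
  have vz : forall k, v k 0 = 0.
    move=> k; apply/eqP; rewrite -sqrf_eq0; apply/eqP.
    by apply: (psumr_eq0P (P := predT) (F := fun k => v k 0 ^+ 2)) => // j _; exact: sqr_ge0.
  have -> : d = 0 by rewrite /d big1 // => k _; rewrite vz mulr0.
  by rewrite bz expr0n /= mulr0.
have bpos : 0 < b by rewrite lt_def bp b0.
have := sq_expand b d u v; rewrite -/a -/b -/d => E.
have : 0 <= \sum_k (b * u k 0 - d * v k 0) ^+ 2 by apply: sumr_ge0 => k _; exact: sqr_ge0.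
rewrite E => H.
have : 0 <= b * (a * b - d ^+ 2).
  by move: H; congr (_ <= _); ring.
by rewrite pmulr_rge0 // subr_ge0.
Qed.

Lemma norm2_triangle u v : norm2 (u + v) <= norm2 u + norm2 v.
Proof.
rewrite /norm2.
set a := \sum_k u k 0 ^+ 2; set b := \sum_k v k 0 ^+ 2; set d := \sum_k u k 0 * v k 0.
have a0 : 0 <= a by apply: sumr_ge0 => k _; exact: sqr_ge0.
have b0 : 0 <= b by apply: sumr_ge0 => k _; exact: sqr_ge0.
have E : \sum_k (u + v) k 0 ^+ 2 = a + 2 * d + b.
  rewrite /a /b /d mulr_sumr -!big_split /=; apply: eq_bigr => k _.
  by rewrite mxE sqrrD; ring.
have dle : d <= Num.sqrt a * Num.sqrt b.
  rewrite -sqrtrM //; apply: le_trans (ler_norm d) _.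
  rewrite -sqrtr_sqr ler_sqrt; last by rewrite mulr_ge0.
  exact: cauchy_schwarz.
have s0 : 0 <= Num.sqrt a + Num.sqrt b by rewrite addr_ge0 ?sqrtr_ge0.
rewrite E -(ger0_norm s0) -sqrtr_sqr ler_sqrt ?sqr_ge0 //.
rewrite sqrrD !sqr_sqrtr //.
by move: dle; lra.
Qed.

End Norm.
Section Key.
Variables (R : realType) (n s N : nat) (X : 'M[R]_(n, N)) (y : 'I_N -> R).

Lemma sum_in_le (T : {set 'I_N}) (F : 'I_N -> R) :
  (forall t, 0 <= F t) -> \sum_(t in T) F t <= \sum_t F t.
Proof.
move=> h; rewrite big_mkcond /=; apply: ler_sum => t _.
by case: ifP => // _; exact: h.
Qed.

Lemma xi_bound r (A A' : 'M[R]_(n, s)) (T : {set 'I_N}) : (#|T| <= r)%N ->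
  \sum_(t in T) `|phi X y A t - phi X y A' t| <=
   xi s X y r * l1 (fun t => phi X y A t - phi X y A' t).
Proof.
move=> cT.
set d := fun t => phi X y A t - phi X y A' t.
have [E|NE] := pselect (phi X y A = phi X y A').
  have d0 : forall t, d t = 0 by move=> t; rewrite /d E subrr.
  have e2 : forall t, `|phi X y A t - phi X y A' t| = 0 by move=> t; rewrite E subrr normr0.
  by rewrite /l1 /d !big1 ?mulr0 // => t _; exact: e2.
have hub : has_ubound [set q | exists (A A' : 'M[R]_(n, s)) (T : {set 'I_N}),
         phi X y A <> phi X y A' /\ (#|T| <= r)%N /\
         q = (\sum_(t in T) `|phi X y A t - phi X y A' t|) /
             l1 (fun t => phi X y A t - phi X y A' t)].
  exists 1 => q [B [B' [T' [_ [_ ->]]]]].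
  set L := l1 _; have L0 : 0 <= L by apply: sumr_ge0.
  have SL : \sum_(t in T') `|phi X y B t - phi X y B' t| <= L.
    by apply: sum_in_le => t.
  have [Lz|Lp] := eqVneq L 0; first by rewrite Lz invr0 mulr0.
  by rewrite ler_pdivrMr ?mul1r // lt_def Lp L0.
have Hq := ub_le_sup hub.
have Lp : 0 < l1 d.
  rewrite lt_def sumr_ge0 // andbT; apply/eqP => L0; apply: NE.
  apply/funext => t; apply/eqP; rewrite -subr_eq0; apply/eqP.
  have := @psumr_eq0P _ _ predT (fun t => `|d t|) (fun j _ => normr_ge0 (d j)) L0 t isT.
  by move/eqP; rewrite normr_eq0 => /eqP.
have := Hq ((\sum_(t in T) `|d t|) / l1 d) (ex_intro _ A (ex_intro _ A' (ex_intro _ T (conj NE (conj cT erefl))))).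
by rewrite ler_pdivrMr.
Qed.

Variables (A0 Ahat : 'M[R]_(n, s)).
Hypothesis hJ : J X y Ahat <= J X y A0.

Let h t := phi X y Ahat t - phi X y A0 t.

Lemma key_ineq r : (1 - 2 * xi s X y r) * l1 h <= 2 * delta X y r A0.
Proof.
set xr := xi s X y r.
have ne : nonempty [set d | exists w : 'I_N -> R,
         (#|[set t | w t != 0%R]| <= r)%N /\ d = l1 (fun t => phi X y A0 t - w t)].
  exists (l1 (fun t => phi X y A0 t - 0)); exists (fun _ => 0); split => //.
  suff -> : [set t : 'I_N | (0:R) != 0] = set0 by rewrite cards0.
  by apply/setP => t; rewrite !inE eqxx.
suff : (1 - 2 * xr) * l1 h / 2 <= delta X y r A0.
  by move=> H; rewrite [2 * delta _ _ _ _]mulrC -ler_pdivrMr.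
apply: lb_le_inf ne _ => d [w [cw ->]].
set T := [set t | w t != 0].
have xb := xi_bound Ahat A0 cw; rewrite -/xr in xb.
have pt : forall t, `|phi X y A0 t| - `|phi X y Ahat t| <=
    2 * (if t \in T then `|h t| else 0) - `|h t| + 2 * `|phi X y A0 t - w t|.
  move=> t; rewrite /h.
  have t1 := ler_normB (phi X y Ahat t) (phi X y A0 t).
  have t2 := lerB_dist (phi X y A0 t) (phi X y Ahat t).
  have t3 : `|phi X y A0 t - phi X y Ahat t| = `|phi X y Ahat t - phi X y A0 t| by rewrite distrC.
  case: ifP => tT.
    have := normr_ge0 (phi X y A0 t - w t); lra.
  have wt : w t = 0 by move: tT; rewrite inE => /negbFE /eqP.
  rewrite wt subr0; lra.
have S : \sum_t (`|phi X y A0 t| - `|phi X y Ahat t|) <=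
    \sum_t (2 * (if t \in T then `|h t| else 0) - `|h t| + 2 * `|phi X y A0 t - w t|).
  by apply: ler_sum => t _; exact: pt.
rewrite sumrB big_split /= big_split /= sumrN -!mulr_sumr -big_mkcond /= in S.
have hJ0 := hJ; rewrite /J /l1 in hJ0 xb *.
rewrite /h in S; rewrite -/T in xb.
set Sh := \sum_t `|phi X y Ahat t - phi X y A0 t|.
rewrite -/Sh in S xb.
set p := xr * Sh in xb.
have -> : (1 - 2 * xr) * Sh / 2 = Sh / 2 - p by rewrite /p; field.
move: S xb hJ0.
set a := \sum_(i in T) _; set b := \sum_i `|phi X y A0 i - w i|.
set c1 := \sum_i `|phi X y A0 i|; set c2 := \sum_i `|phi X y Ahat i|.
move=> *; lra.
Qed.


End Key.

Section Main.
Variables (R : realType) (n s N : nat) (X : 'M[R]_(n, N)) (y : 'I_N -> R).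
Variable m : nat.
Hypotheses (n0 : (0 < n)%N) (hm : (nu X <= m)%N) (mN : (m <= N)%N).

Lemma xt_scale t (c : R) (u : 'cV[R]_n) : xt X t (c *: u) = c * xt X t u.
Proof. by rewrite /xt mulr_sumr; apply: eq_bigr => k _; rewrite mxE mulrCA. Qed.

Lemma gamma_pos : 0 < gamma X m.
Proof.
have [c c0 hc] := gamma_lb X.
apply: lt_le_trans c0 _; apply: lb_le_inf.
  pose i0 := Ordinal n0.
  exists (\sum_(j < #|[set: 'I_N]|) `|((Xsub X [set: 'I_N])^T *m ((delta_mx i0 (0 : 'I_1) : 'cV[R]_n))) j 0|).
  exists ((delta_mx i0 (0 : 'I_1) : 'cV[R]_n)), [set: 'I_N]; split; last split; [|by rewrite cardsT card_ord|by []].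
  rewrite /norm2 (bigD1 i0) //= big1 ?addr0 => [|k nk]; last by rewrite mxE (negbTE nk) expr0n.
  by rewrite mxE !eqxx expr1n sqrtr1.
move=> g [eta [I [e1 [cI ->]]]]; rewrite xsub_sum; apply: hc => //.
exact: leq_trans hm cI.
Qed.

Lemma gamma_vec (u : 'cV[R]_n) (I : {set 'I_N}) : (m <= #|I|)%N ->
  gamma X m * norm2 u <= \sum_(t in I) `|xt X t u|.
Proof.
move=> cI.
have S0 : 0 <= \sum_(t in I) `|xt X t u| by apply: sumr_ge0.
have [nz|np] := eqVneq (norm2 u) 0; first by rewrite nz mulr0.
have npos : 0 < norm2 u by rewrite lt_def np sqrtr_ge0.
set eta := (norm2 u)^-1 *: u.
have e1 : norm2 eta = 1 by rewrite norm2_scale ger0_norm ?invr_ge0 ?ltW // mulVf.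
have hlb : has_lbound [set g | exists (eta : 'cV[R]_n) (I : {set 'I_N}),
         norm2 eta = 1 /\ (m <= #|I|)%N /\
         g = \sum_(j < #|I|) `|((Xsub X I)^T *m eta) j 0|].
  by exists 0 => g [e [J [_ [_ ->]]]]; apply: sumr_ge0.
have := ge_inf hlb (ex_intro _ eta (ex_intro _ I (conj e1 (conj cI erefl)))).
rewrite -/(gamma X m) xsub_sum.
under eq_bigr do rewrite xt_scale normrM ger0_norm ?invr_ge0 ?ltW //.
rewrite -mulr_sumr => H.
by rewrite -ler_pdivlMr // mulrC.
Qed.


Variables (A0 Ahat : 'M[R]_(n, s)) (sg0 sgh : {ffun 'I_N -> 'I_s}).
Hypotheses (E0 : sigma_opt X y A0 = Some sg0) (Eh : sigma_opt X y Ahat = Some sgh).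
Variable r : nat.
Hypothesis hxi : xi s X y r < 1 / 2.
Hypothesis hsep : forall i j : 'I_s, i != j ->
     2 * delta X y r A0 / (gamma X m * (1 - 2 * xi s X y r))
       < norm2 (col i A0 - col j A0).
Hypothesis hJ : J X y Ahat <= J X y A0.

Lemma Iset_E (A : 'M[R]_(n, s)) sg : sigma_opt X y A = Some sg ->
  forall i, Iset X y A i = [set t | sg t == i].
Proof. by move=> E i; apply/setP => t; rewrite !inE E. Qed.

Lemma h_on t i j : sg0 t = i -> sgh t = j ->
  phi X y Ahat t - phi X y A0 t = xt X t (col i A0 - col j Ahat).
Proof.
move=> e0 eh; rewrite /phi E0 Eh e0 eh /res /xt.
have -> : forall a b c : R, (a - b) - (a - c) = c - b by move=> *; ring.
rewrite -sumrB; apply: eq_bigr => k _.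
by rewrite !mxE mulrBr.
Qed.

Lemma no_collision i i' j : i != i' ->
  (m <= #|Iset X y A0 i :&: Iset X y Ahat j|)%N ->
  (m <= #|Iset X y A0 i' :&: Iset X y Ahat j|)%N -> False.
Proof.
move=> ii c1 c2.
rewrite !(Iset_E E0) !(Iset_E Eh) in c1 c2.
set I1 := [set t | sg0 t == i] :&: [set t | sgh t == j] in c1.
set I2 := [set t | sg0 t == i'] :&: [set t | sgh t == j] in c2.
set h := fun t => phi X y Ahat t - phi X y A0 t.
set u := col i A0 - col j Ahat; set u' := col i' A0 - col j Ahat.
have g1 := gamma_vec u c1; have g2 := gamma_vec u' c2.
have s1 : \sum_(t in I1) `|xt X t u| = \sum_(t in I1) `|h t|.
  apply: eq_bigr => t; rewrite !inE => /andP[/eqP a /eqP b].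
  by rewrite /h (h_on a b).
have s2 : \sum_(t in I2) `|xt X t u'| = \sum_(t in I2) `|h t|.
  apply: eq_bigr => t; rewrite !inE => /andP[/eqP a /eqP b].
  by rewrite /h (h_on a b).
rewrite s1 in g1; rewrite s2 in g2.
have sl : \sum_(t in I1) `|h t| + \sum_(t in I2) `|h t| <= l1 h.
  rewrite /l1 big_mkcond [X in _ + X <= _]big_mkcond -big_split /=; apply: ler_sum => t _.
  rewrite !inE; case: (eqVneq (sg0 t) i) => [e|_] /=.
    have -> : (sg0 t == i') = false by rewrite e; apply/negbTE.
    by rewrite /= addr0; case: ifP.
  by rewrite add0r; case: ifP.
have tri : norm2 (col i A0 - col i' A0) <= norm2 u + norm2 u'.
  have -> : col i A0 - col i' A0 = u + - u' by rewrite /u /u' opprB addrA subrK.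
  by rewrite -(norm2_opp u'); apply: norm2_triangle.
have key := key_ineq hJ r.
have gp := gamma_pos.
have ep : 0 < 1 - 2 * xi s X y r by move: hxi; lra.
have := hsep ii.
rewrite ltr_pdivrMr ?mulr_gt0 //.
set D := norm2 _; set G := gamma X m; set e := 1 - 2 * _; set dl := delta _ _ _ _.
move=> H.
have H2 : G * D <= l1 h.
  apply: le_trans (_ : G * (norm2 u + norm2 u') <= _).
    by apply: ler_wpM2l => //; apply: ltW.
  by rewrite mulrDr; apply: le_trans sl; apply: lerD.
have H3 : e * (G * D) <= e * l1 h by apply: ler_wpM2l => //; apply: ltW.
have E : D * (G * e) = e * (G * D) by ring.
rewrite E in H.
rewrite -/e in key.
move: H H3 key; lra.
Qed.

End Main.

Lemma card_part (N s : nat) (sg : {ffun 'I_N -> 'I_s}) (A : {set 'I_N}) :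
  #|A| = (\sum_(j < s) #|A :&: [set t | sg t == j]|)%N.
Proof.
rewrite -sum1_card (partition_big (fun t => sg t) predT) //=.
apply: eq_bigr => j _; rewrite -sum1_card; apply: eq_bigl => t.
by rewrite !inE.
Qed.

Lemma pigeon (N s m : nat) (sg : {ffun 'I_N -> 'I_s}) (A : {set 'I_N}) :
  (0 < s)%N -> (0 < m)%N -> (s * m <= #|A|)%N ->
  exists j, (m <= #|A :&: [set t | sg t == j]|)%N.
Proof.
move=> s0 m0 cA.
case: (boolP [exists j, (m <= #|A :&: [set t | sg t == j]|)%N]) => [/existsP //|].
rewrite negb_exists => /forallP H; exfalso.
have : (#|A| <= s * m.-1)%N.
  rewrite (card_part sg A).
  apply: leq_trans (_ : (\sum_(j < s) m.-1 <= _)%N); last by rewrite sum_nat_const card_ord.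
  apply: leq_sum => j _; move: (H j); rewrite -ltnNge.
  by case: m m0 {cA H} => // m' _.
move=> h; have := leq_trans cA h.
case: m m0 {cA H h} => // m' _ /=.
by rewrite leq_pmul2l // ltnn.
Qed.

Theorem lemma7 (R : realType) (n s N : nat)
  (X : 'M[R]_(n, N)) (y : 'I_N -> R) :
  (0 < n)%N -> (0 < s)%N -> (0 < N)%N ->
  \rank X = n ->
  forall m : nat, (nu X <= m)%N ->
  forall A0 : 'M[R]_(n, s),
  (forall i : 'I_s, (s * m <= #|Iset X y A0 i|)%N) ->
  forall r : nat, (r <= N)%N ->
  xi s X y r < 1 / 2 ->
  (forall i j : 'I_s, i != j ->
     2 * delta X y r A0 / (gamma X m * (1 - 2 * xi s X y r))
       < norm2 (col i A0 - col j A0)) ->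
  forall Ahat : 'M[R]_(n, s),
  (forall A : 'M[R]_(n, s), J X y Ahat <= J X y A) ->
  comparable_over X y A0 Ahat.
Proof.
move=> n0 s0 N0 _ m hm A0 hA0 r _ hxi hsep Ahat hmin.
have m0 : (0 < m)%N by apply: leq_trans (nu_pos X n0) hm.
have [sg0 E0] := sigma_some X y A0 s0.
have [sgh Eh] := sigma_some X y Ahat s0.
pose i0 := Ordinal s0.
have mN : (m <= N)%N.
  apply: leq_trans (_ : (s * m <= N)%N); first by rewrite leq_pmull.
  by apply: leq_trans (hA0 i0) _; apply: leq_trans (max_card _) _; rewrite card_ord.
have P : forall i, exists j, (m <= #|Iset X y A0 i :&: Iset X y Ahat j|)%N.
  move=> i; have := hA0 i; rewrite (Iset_E E0) => hi.
  have [j hj] := pigeon sgh s0 m0 hi.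
  by exists j; rewrite (Iset_E Eh).
pose pi i := xchoose (P i).
have piP : forall i, (m <= #|Iset X y A0 i :&: Iset X y Ahat (pi i)|)%N.
  by move=> i; exact: (xchooseP (P i)).
have inj : injective pi.
  move=> i i' e; apply/eqP; apply/negPn/negP => ne.
  apply: (no_collision n0 hm mN E0 Eh hxi hsep (hmin A0) ne (piP i)).
  by rewrite e; apply: piP.
exists (perm inj) => i; rewrite permE.
exact: leq_trans hm (piP i).
Qed.
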